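(* $E_{FTP}$ is sound and ground-complete for bisimilarity on $T(\Sigma_{FTP})$: for all $t,t'\in T(\Sigma_{FTP})$, $E_{FTP}\vdash t=t'$ if and only if $t\sim t'$.
   Context: Fix a finite nonempty set $\mathcal A$ of actions, a finite set $\mathcal P$ of predicates, a subset $\mathcal P^I\subseteq\mathcal P$ of implicit predicates, and for each $P\in\mathcal P^I$ a set $\mathcal A_P\subseteq\mathcal A$. $\Sigma_{FTP}$ consists of a constant $\delta$, constants $\kappa_P$ ($P\in\mathcal P$), unary prefixes $a.\_$ ($a\in\mathcal A$), and binary $+$; closed terms $T(\Sigma_{FTP})$. Semantics: the least transition relation and predicate relation closed under: $a.x\xrightarrow{a}x$; $x\xrightarrow{a}x'\Rightarrow x+y\xrightarrow{a}x'$; $y\xrightarrow{a}y'\Rightarrow x+y\xrightarrow{a}y'$; $P\kappa_P$; $Px\Rightarrow P(x+y)$; $Py\Rightarrow P(x+y)$; $Px\Rightarrow P(a.x)$ for $P\in\mathcal P^I$, $a\in\mathcal A_P$. A symmetric relation $R$ on closed terms is a bisimulation if whenever $(s,t)\in R$: $s\xrightarrow{a}s'$ implies $t\xrightarrow{a}t'$ with $(s',t')\in R$ for some $t'$, and $Ps$ implies $Pt$; $\sim$ is the union of all bisimulations. $E_{FTP}$ consists of $x+y=y+x$, $(x+y)+z=x+(y+z)$, $x+x=x$, $x+\delta=x$, and $a.(x+\kappa_P)=a.(x+\kappa_P)+\kappa_P$ for $P\in\mathcal P^I$, $a\in\mathcal A_P$; $\vdash$ is derivability in equational logic. *)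

(* Defs.v *)
From mathcomp Require Import all_boot.
Set Implicit Arguments. Unset Strict Implicit. Unset Printing Implicit Defensive.

(* Terms are open
   (variables indexed by nat) so that equational logic can be defined with
   substitution; closed_term terms are those without variables. *)
Section FTP.
Variables (A Pr : finType).
Variable (implicit : pred Pr).
Variable (AP : Pr -> pred A).           (* P |-> A_P (used only for P in P^I) *)

Inductive term : Type :=
| Var  : nat -> term
| Dlt  : term
| Kap  : Pr -> term
| Pre  : A -> term -> term
| Plus : term -> term -> term.

Fixpoint closed_term (t : term) : Prop :=
  match t with
  | Var _ => False
  | Dlt => True
  | Kap _ => True
  | Pre _ u => closed_term u
  | Plus u v => closed_term u /\ closed_term v
  end.

Inductive step : term -> A -> term -> Prop :=
| step_pre a x : step (Pre a x) a x
| step_plusl a x x' y : step x a x' -> step (Plus x y) a x'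
| step_plusr a x y y' : step y a y' -> step (Plus x y) a y'.

Inductive holds : Pr -> term -> Prop :=
| holds_kap P : holds P (Kap P)
| holds_plusl P x y : holds P x -> holds P (Plus x y)
| holds_plusr P x y : holds P y -> holds P (Plus x y)
| holds_pre P a x : implicit P -> a \in AP P -> holds P x -> holds P (Pre a x).

Definition bisimulation (R : term -> term -> Prop) : Prop :=
  (forall s t, R s t -> closed_term s /\ closed_term t) /\
  (forall s t, R s t -> R t s) /\
  (forall s t, R s t ->
     (forall a s', step s a s' -> exists t', step t a t' /\ R s' t') /\
     (forall P, holds P s -> holds P t)).

Definition bisim (s t : term) : Prop :=
  exists R, bisimulation R /\ R s t.

Fixpoint subst (sg : nat -> term) (t : term) : term :=
  match t with
  | Var n => sg n
  | Dlt => Dlt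
  | Kap P => Kap P
  | Pre a u => Pre a (subst sg u)
  | Plus u v => Plus (subst sg u) (subst sg v)
  end.

Definition vx := Var 0.
Definition vy := Var 1.
Definition vz := Var 2.

Inductive axiom : term -> term -> Prop :=
| ax_comm : axiom (Plus vx vy) (Plus vy vx)
| ax_assoc : axiom (Plus (Plus vx vy) vz) (Plus vx (Plus vy vz))
| ax_idem : axiom (Plus vx vx) vx
| ax_delta : axiom (Plus vx Dlt) vx
| ax_impl P a : implicit P -> a \in AP P ->
    axiom (Pre a (Plus vx (Kap P))) (Plus (Pre a (Plus vx (Kap P))) (Kap P)).

Inductive derivable : term -> term -> Prop :=
| der_ax sg l r : axiom l r -> derivable (subst sg l) (subst sg r)
| der_refl t : derivable t t
| der_sym t u : derivable t u -> derivable u t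
| der_trans t u v : derivable t u -> derivable u v -> derivable t v
| der_pre a t u : derivable t u -> derivable (Pre a t) (Pre a u)
| der_plus t t' u u' : derivable t t' -> derivable u u' ->
    derivable (Plus t u) (Plus t' u').

End FTP.

(* Main.v *)
Require Import Defs.
From mathcomp Require Import all_boot.
From Stdlib Require Import Setoid.

Set Implicit Arguments.

Lemma step_closed (A Pr : finType) (s : term A Pr) a s' :
  step s a s' -> closed_term s -> closed_term s'.
Proof. induction 1; simpl; tauto. Qed.

Lemma subst_closed (A Pr : finType) (sg : nat -> term A Pr) t :
  closed_term t -> subst sg t = t.
Proof.
  induction t; simpl; try tauto; intros H.
  - by rewrite IHt.
  - destruct H as [H1 H2]; by rewrite IHt1 // IHt2.
Qed.

Lemma closed_subst (A Pr : finType) (sg : nat -> term A Pr) t :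
  (forall n, closed_term (sg n)) -> closed_term (subst sg t).
Proof. intros H; induction t; simpl; auto. Qed.

Lemma subst_comp (A Pr : finType) (sg sg' : nat -> term A Pr) t :
  subst sg' (subst sg t) = subst (fun n => subst sg' (sg n)) t.
Proof. induction t; simpl; auto; congruence. Qed.

Lemma bisim_closed (A Pr : finType) implicit (AP : Pr -> pred A) s t :
  bisim implicit AP s t -> closed_term s /\ closed_term t.
Proof. intros [R [[H1 _] HR]]; exact (H1 _ _ HR). Qed.

Lemma bisim_sym (A Pr : finType) implicit (AP : Pr -> pred A) s t :
  bisim implicit AP s t -> bisim implicit AP t s.
Proof. intros [R [HB HR]]; exists R; split; auto; apply HB; auto. Qed.

Lemma bisim_step (A Pr : finType) implicit (AP : Pr -> pred A) s t a s' :
  bisim implicit AP s t -> step s a s' ->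
  exists t', step t a t' /\ bisim implicit AP s' t'.
Proof.
  intros [R [HB HR]] Hs.
  destruct (proj2 (proj2 HB) _ _ HR) as [H _].
  destruct (H _ _ Hs) as [t' [Ht HR']]. exists t'; split; auto.
  exists R; split; auto.
Qed.

Lemma bisim_holds (A Pr : finType) implicit (AP : Pr -> pred A) s t P :
  bisim implicit AP s t -> holds implicit AP P s -> holds implicit AP P t.
Proof.
  intros [R [HB HR]]. destruct HB as [_ [_ H3]]. exact (proj2 (H3 _ _ HR) P).
Qed.

Lemma bisim_intro (A Pr : finType) implicit (AP : Pr -> pred A) s t :
  closed_term s -> closed_term t ->
  (forall a s', step s a s' -> exists t', step t a t' /\ bisim implicit AP s' t') ->
  (forall a t', step t a t' -> exists s', step s a s' /\ bisim implicit AP s' t') ->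
  (forall P, holds implicit AP P s <-> holds implicit AP P t) ->
  bisim implicit AP s t.
Proof.
  intros Cs Ct H1 H2 H3.
  exists (fun x y => bisim implicit AP x y \/ (x = s /\ y = t) \/ (x = t /\ y = s)).
  split; [|right; left; auto].
  split; [|split].
  - intros x y [H|[[-> ->]|[-> ->]]]; auto. exact (bisim_closed H).
  - intros x y [H|[[-> ->]|[-> ->]]]; auto. left; exact (bisim_sym H).
  - intros x y [H|[[-> ->]|[-> ->]]].
    + split.
      * intros a x' Hx. destruct (bisim_step H Hx) as [y' [? ?]]. eauto.
      * intros P; exact (bisim_holds H).
    + split.
      * intros a x' Hx. destruct (H1 _ _ Hx) as [y' [? ?]]. eauto.
      * intros P; apply H3.
    + split.
      * intros a x' Hx. destruct (H2 _ _ Hx) as [y' [? ?]]. exists y'; split; auto.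
        left; apply bisim_sym; auto.
      * intros P; apply H3.
Qed.

Lemma bisim_refl (A Pr : finType) implicit (AP : Pr -> pred A) s :
  closed_term s -> bisim implicit AP s s.
Proof.
  intros Cs. exists (fun x y => closed_term x /\ x = y). split; [|auto].
  split; [|split].
  - intros x y [H ->]; auto.
  - intros x y [H ->]; auto.
  - intros x y [H ->]; split.
    + intros a x' Hx. exists x'; split; auto. split; auto. exact (step_closed Hx H).
    + auto.
Qed.

Lemma bisim_trans (A Pr : finType) implicit (AP : Pr -> pred A) s u t :
  bisim implicit AP s u -> bisim implicit AP u t -> bisim implicit AP s t.
Proof.
  intros H1 H2.
  exists (fun x y => exists z, bisim implicit AP x z /\ bisim implicit AP z y).
  split; [|eauto].
  split; [|split].
  - intros x y [z [Ha Hb]]. split; [exact (proj1 (bisim_closed Ha))|exact (proj2 (bisim_closed Hb))].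
  - intros x y [z [Ha Hb]]. exists z; split; apply bisim_sym; auto.
  - intros x y [z [Ha Hb]]. split.
    + intros a x' Hx. destruct (bisim_step Ha Hx) as [z' [Hz Hz']].
      destruct (bisim_step Hb Hz) as [y' [Hy Hy']]. eauto.
    + intros P HP. exact (bisim_holds Hb (bisim_holds Ha HP)).
Qed.

Lemma bisim_pre (A Pr : finType) implicit (AP : Pr -> pred A) a s t :
  bisim implicit AP s t -> bisim implicit AP (Pre a s) (Pre a t).
Proof.
  intros H. destruct (bisim_closed H) as [Cs Ct].
  apply bisim_intro; simpl; auto.
  - intros b s' Hs. inversion Hs; subst. exists t; split; auto. constructor.
  - intros b t' Ht. inversion Ht; subst. exists s; split; auto. constructor.
  - intros P; split; intros HP; inversion HP; subst; apply holds_pre; auto.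
    + eapply bisim_holds; eauto.
    + eapply bisim_holds; [apply bisim_sym; exact H|]; auto.
Qed.

Lemma bisim_plus (A Pr : finType) implicit (AP : Pr -> pred A) s1 s2 t1 t2 :
  bisim implicit AP s1 t1 -> bisim implicit AP s2 t2 ->
  bisim implicit AP (Plus s1 s2) (Plus t1 t2).
Proof.
  intros H1 H2. destruct (bisim_closed H1); destruct (bisim_closed H2).
  apply bisim_intro; simpl; auto.
  - intros b s' Hs. inversion Hs as [|? ? ? ? K|? ? ? ? K]; subst.
    + destruct (bisim_step H1 K) as [t' [? ?]]. exists t'; split; auto. by apply step_plusl.
    + destruct (bisim_step H2 K) as [t' [? ?]]. exists t'; split; auto. by apply step_plusr.
  - intros b t' Ht. inversion Ht as [|? ? ? ? K|? ? ? ? K]; subst.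
    + destruct (bisim_step (bisim_sym H1) K) as [s' [? ?]]. exists s'; split.
      by apply step_plusl. by apply bisim_sym.
    + destruct (bisim_step (bisim_sym H2) K) as [s' [? ?]]. exists s'; split.
      by apply step_plusr. by apply bisim_sym.
  - intros P; split; intros HP; inversion HP as [|? ? ? K|? ? ? K|]; subst.
    + apply holds_plusl; exact (bisim_holds H1 K).
    + apply holds_plusr; exact (bisim_holds H2 K).
    + apply holds_plusl; exact (bisim_holds (bisim_sym H1) K).
    + apply holds_plusr; exact (bisim_holds (bisim_sym H2) K).
Qed.

Lemma bisim_same (A Pr : finType) implicit (AP : Pr -> pred A) s t :
  closed_term s -> closed_term t ->
  (forall a z, step s a z <-> step t a z) ->
  (forall P, holds implicit AP P s <-> holds implicit AP P t) ->
  bisim implicit AP s t.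
Proof.
  intros Cs Ct H1 H2. apply bisim_intro; auto.
  - intros a s' Hs. exists s'; split; [by apply H1|].
    apply bisim_refl; exact (step_closed Hs Cs).
  - intros a t' Ht. exists t'; split; [by apply H1|].
    apply bisim_refl; exact (step_closed Ht Ct).
Qed.

Lemma step_plus_iff (A Pr : finType) (x y : term A Pr) a z :
  step (Plus x y) a z <-> step x a z \/ step y a z.
Proof.
  split.
  - intros H; inversion H; subst; auto.
  - intros [H|H]; [apply step_plusl|apply step_plusr]; auto.
Qed.

Lemma step_pre_iff (A Pr : finType) (x : term A Pr) a b z :
  step (Pre a x) b z <-> b = a /\ z = x.
Proof.
  split.
  - intros H; inversion H; subst; auto.
  - intros [-> ->]; constructor.
Qed.

Lemma step_kap (A Pr : finType) (P : Pr) a (z : term A Pr) : ~ step (Kap A P) a z.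
Proof. intros H; inversion H. Qed.

Lemma step_dlt (A Pr : finType) a (z : term A Pr) : ~ step (Dlt A Pr) a z.
Proof. intros H; inversion H. Qed.

Lemma holds_plus_iff (A Pr : finType) implicit (AP : Pr -> pred A) P (x y : term A Pr) :
  holds implicit AP P (Plus x y) <-> holds implicit AP P x \/ holds implicit AP P y.
Proof.
  split.
  - intros H; inversion H; subst; auto.
  - intros [H|H]; [apply holds_plusl|apply holds_plusr]; auto.
Qed.

Lemma holds_kap_iff (A Pr : finType) implicit (AP : Pr -> pred A) P Q :
  holds implicit AP P (Kap A Q) <-> P = Q.
Proof.
  split.
  - intros H; inversion H; subst; auto.
  - intros ->; constructor.
Qed.

Lemma holds_dlt (A Pr : finType) implicit (AP : Pr -> pred A) P :
  ~ holds implicit AP P (Dlt A Pr).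
Proof. intros H; inversion H. Qed.

Lemma holds_pre_iff (A Pr : finType) implicit (AP : Pr -> pred A) P a (x : term A Pr) :
  holds implicit AP P (Pre a x) <-> implicit P /\ a \in AP P /\ holds implicit AP P x.
Proof.
  split.
  - intros H; inversion H; subst; auto.
  - intros [? [? ?]]; apply holds_pre; auto.
Qed.

Lemma axiom_sound (A Pr : finType) implicit (AP : Pr -> pred A) l r sg :
  axiom implicit AP l r -> (forall n, closed_term (sg n)) ->
  bisim implicit AP (subst sg l) (subst sg r).
Proof.
  intros Hax Hc.
  apply bisim_same; try (apply closed_subst; exact Hc).
  - destruct Hax; simpl; intros b z;
      repeat setoid_rewrite step_plus_iff; repeat setoid_rewrite step_pre_iff;
      try (pose proof (@step_dlt A Pr b z)); try (pose proof (@step_kap A Pr P b z)); tauto.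
  - destruct Hax; simpl; intros Q;
      repeat setoid_rewrite holds_plus_iff; repeat setoid_rewrite holds_pre_iff;
      repeat setoid_rewrite holds_kap_iff;
      try (pose proof (@holds_dlt A Pr implicit AP Q)); try tauto.
    split; [tauto|]. intros [HH| ->]; [tauto|].
    split; [auto|split; [auto|]]. apply holds_plusr; constructor.
Qed.

Lemma soundness_gen (A Pr : finType) implicit (AP : Pr -> pred A) t u :
  derivable implicit AP t u -> forall sg, (forall n, closed_term (sg n)) ->
  bisim implicit AP (subst sg t) (subst sg u).
Proof.
  induction 1; intros sg' Hc.
  - rewrite !subst_comp. apply axiom_sound; auto.
    intros n; apply closed_subst; auto.
  - apply bisim_refl, closed_subst; auto.
  - apply bisim_sym; auto.
  - eapply bisim_trans; eauto.
  - simpl; apply bisim_pre; auto.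
  - simpl; apply bisim_plus; auto.
Qed.

Definition sg3 (A Pr : finType) (x y z : term A Pr) : nat -> term A Pr :=
  fun n => match n with 0 => x | 1 => y | _ => z end.


Lemma d_comm (A Pr : finType) implicit (AP : Pr -> pred A) (x y : term A Pr) :
  derivable implicit AP (Plus x y) (Plus y x).
Proof.
  change (derivable implicit AP (subst (sg3 x y x) (Plus (vx A Pr) (vy A Pr)))
                                (subst (sg3 x y x) (Plus (vy A Pr) (vx A Pr)))).
  apply der_ax; constructor.
Qed.

Lemma d_assoc (A Pr : finType) implicit (AP : Pr -> pred A) (x y z : term A Pr) :
  derivable implicit AP (Plus (Plus x y) z) (Plus x (Plus y z)).
Proof.
  change (derivable implicit AP
    (subst (sg3 x y z) (Plus (Plus (vx A Pr) (vy A Pr)) (vz A Pr)))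
    (subst (sg3 x y z) (Plus (vx A Pr) (Plus (vy A Pr) (vz A Pr))))).
  apply der_ax; constructor.
Qed.

Lemma d_idem (A Pr : finType) implicit (AP : Pr -> pred A) (x : term A Pr) :
  derivable implicit AP (Plus x x) x.
Proof.
  change (derivable implicit AP (subst (sg3 x x x) (Plus (vx A Pr) (vx A Pr)))
                                (subst (sg3 x x x) (vx A Pr))).
  apply der_ax; constructor.
Qed.

Lemma d_delta (A Pr : finType) implicit (AP : Pr -> pred A) (x : term A Pr) :
  derivable implicit AP (Plus x (Dlt A Pr)) x.
Proof.
  change (derivable implicit AP (subst (sg3 x x x) (Plus (vx A Pr) (Dlt A Pr)))
                                (subst (sg3 x x x) (vx A Pr))).
  apply der_ax; constructor.
Qed.

Lemma d_impl (A Pr : finType) (implicit : pred Pr) (AP : Pr -> pred A) (x : term A Pr) P a :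
  implicit P -> a \in AP P ->
  derivable implicit AP (Pre a (Plus x (Kap A P))) (Plus (Pre a (Plus x (Kap A P))) (Kap A P)).
Proof.
  intros H1 H2.
  change (derivable implicit AP
    (subst (sg3 x x x) (Pre a (Plus (vx A Pr) (Kap A P))))
    (subst (sg3 x x x) (Plus (Pre a (Plus (vx A Pr) (Kap A P))) (Kap A P)))).
  apply der_ax; constructor; auto.
Qed.

Lemma d_absorb (A Pr : finType) implicit (AP : Pr -> pred A) (x y z : term A Pr) :
  derivable implicit AP x (Plus x z) ->
  derivable implicit AP (Plus x y) (Plus (Plus x y) z).
Proof.
  intros H.
  eapply der_trans. { apply der_plus; [exact H|apply der_refl]. }
  eapply der_trans. { apply d_assoc. }
  eapply der_trans. { apply der_plus; [apply der_refl|apply d_comm]. }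
  apply der_sym, d_assoc.
Qed.

Lemma holds_der (A Pr : finType) implicit (AP : Pr -> pred A) P (t : term A Pr) :
  holds implicit AP P t -> derivable implicit AP t (Plus t (Kap A P)).
Proof.
  induction 1.
  - apply der_sym, d_idem.
  - apply d_absorb; auto.
  - eapply der_trans. { apply d_comm. }
    eapply der_trans. { apply d_absorb; exact IHholds. }
    apply der_plus; [apply d_comm|apply der_refl].
  - eapply der_trans. { apply der_pre; exact IHholds. }
    eapply der_trans. { apply d_impl; auto. }
    apply der_plus; [apply der_pre, der_sym; exact IHholds|apply der_refl].
Qed.

Lemma step_der (A Pr : finType) implicit (AP : Pr -> pred A) (t : term A Pr) a u :
  step t a u -> derivable implicit AP t (Plus t (Pre a u)).
Proof.
  induction 1.
  - apply der_sym, d_idem.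
  - apply d_absorb; auto.
  - eapply der_trans. { apply d_comm. }
    eapply der_trans. { apply d_absorb; exact IHstep. }
    apply der_plus; [apply d_comm|apply der_refl].
Qed.

From mathcomp Require Import zify.

Fixpoint depth (A Pr : finType) (t : term A Pr) : nat :=
  match t with
  | Pre _ u => (depth u).+1
  | Plus u v => maxn (depth u) (depth v)
  | _ => 0
  end.

Lemma step_depth (A Pr : finType) (t : term A Pr) a u :
  step t a u -> depth u < depth t.
Proof. induction 1; simpl; lia. Qed.

Lemma complete_n (A Pr : finType) implicit (AP : Pr -> pred A) n :
  forall t t' : term A Pr, depth t + depth t' < n ->
  bisim implicit AP t t' -> derivable implicit AP t t'.
Proof.
  induction n as [|n IH]; [intros; lia|].
  have half : forall t t' : term A Pr, depth t + depth t' < n.+1 ->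
      bisim implicit AP t' t -> derivable implicit AP t (Plus t t').
  { intros t t' Hd Hb.
    have Ct' := proj1 (bisim_closed Hb).
    have gen : forall s, closed_term s -> depth s <= depth t' ->
      (forall a u, step s a u -> exists v, step t a v /\ bisim implicit AP u v) ->
      (forall P, holds implicit AP P s -> holds implicit AP P t) ->
      derivable implicit AP t (Plus t s).
    { induction s as [k| |P|a u IHu|s1 IH1 s2 IH2]; simpl; intros Cs Hds Hst Hh.
      - contradiction.
      - apply der_sym, d_delta.
      - apply holds_der, Hh; constructor.
      - destruct (Hst a u (step_pre a u)) as [v [Hv Huv]].
        have Hvd := step_depth Hv.
        have Duv : derivable implicit AP u v by apply IH; [lia|].
        eapply der_trans. { exact (step_der implicit AP Hv). }
        apply der_plus; [apply der_refl|apply der_pre, der_sym, Duv].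
      - destruct Cs as [C1 C2].
        have D1 : derivable implicit AP t (Plus t s1).
        { apply IH1; auto; [lia| |].
          - intros a u Hs; apply Hst, step_plusl, Hs.
          - intros P Hp; apply Hh, holds_plusl, Hp. }
        have D2 : derivable implicit AP t (Plus t s2).
        { apply IH2; auto; [lia| |].
          - intros a u Hs; apply Hst, step_plusr, Hs.
          - intros P Hp; apply Hh, holds_plusr, Hp. }
        eapply der_trans. { exact D1. }
        eapply der_trans. { apply der_plus; [exact D2|apply der_refl]. }
        eapply der_trans. { apply d_assoc. }
        apply der_plus; [apply der_refl|apply d_comm]. }
    apply gen; auto.
    - intros a u Hs. exact (bisim_step Hb Hs).
    - intros P Hp. exact (bisim_holds Hb Hp). }
  intros t t' Hd Hb.
  eapply der_trans. { apply (half t t'); [lia|apply bisim_sym; exact Hb]. }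
  eapply der_trans. { apply d_comm. }
  apply der_sym, half; [lia|exact Hb].
Qed.

Theorem theorem1 (A Pr : finType) (implicit : pred Pr) (AP : Pr -> pred A)
  (A_nonempty : 0 < #|A|) (t t' : term A Pr) :
  closed_term t -> closed_term t' ->
  (derivable implicit AP t t' <-> bisim implicit AP t t').
Proof.
  intros Ct Ct'. split.
  - intros H.
    have := soundness_gen H (fun _ => Dlt A Pr) (fun _ => I).
    by rewrite !subst_closed.
  - intros H. apply (complete_n (depth t + depth t').+1); auto.
Qed.
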